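(* Let $\alpha\ge 1$ and let $G=(V,E)$ be a finite connected undirected unweighted $\alpha$-almost regular graph with $n$ vertices. If $r\ge\alpha^2$, then for every $\lambda\in[0,1]$ and every nonempty initial mutant set $S_0\subseteq V$, the $\lambda$-mixed Moran process with fitness $r$ has expected absorption time $O_r(n^4)$ and fixation probability $\Omega_r(n^{-2})$; that is, there are constants $C_r,c_r>0$ depending only on $r$ (not on $G$, $n$, $\lambda$ or $S_0$) with absorption time at most $C_r n^4$ and $\mathrm{fp}^{\lambda,r}_G(S_0)\ge c_r n^{-2}$.
   Context: A graph is $\alpha$-almost regular if its maximum degree is at most $\alpha$ times its minimum degree. The $\lambda$-mixed Moran process on a connected graph $G=(V,E)$ with $n=|V|\ge 2$: each vertex hosts a resident (fitness $1$) or mutant (fitness $r>0$); the state is the mutant set $S_t\subseteq V$. Each step, independently: with probability $\lambda$ a Birth-death step (a vertex $u$ chosen with probability proportional to fitness among all vertices; a uniformly random neighbor of $u$ takes $u$'s type); with probability $1-\lambda$ a death-Birth step (a uniformly random vertex $v$ dies; a neighbor $u$ of $v$ chosen with probability proportional to fitness among the neighbors of $v$; $v$ takes $u$'s type). $\mathrm{fp}^{\lambda,r}_G(S_0)$ is the probability of reaching $S_t=V$ from $S_0$; the absorption time is the expected number of steps until $S_t\in\{\emptyset,V\}$. *)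

(* Defs.v *)
From HB Require Import structures.
From mathcomp Require Import all_boot all_order all_algebra.
From mathcomp Require Import all_classical all_reals all_analysis.
Set Implicit Arguments. Unset Strict Implicit. Unset Printing Implicit Defensive.
Import Order.TTheory GRing.Theory Num.Theory numFieldNormedType.Exports.
Local Open Scope ring_scope.

Section Moran.
Variables (R : realType) (V : finType) (e : rel V).

Definition simple_graph := symmetric e /\ irreflexive e.
Definition graph_connected := forall x y : V, connect e x y.
Definition deg (v : V) : nat := #|[set u | e v u]|.
Definition almost_regular (alpha : R) :=
  forall u v : V, (deg u)%:R <= alpha * (deg v)%:R.

Variables (lam r : R).

Definition fit (S : {set V}) (x : V) : R := if x \in S then r else 1.
Definition total_fit (S : {set V}) : R := \sum_(x : V) fit S x.
Definition nbr_fit (S : {set V}) (v : V) : R := \sum_(u : V | e v u) fit S u.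

Definition upd (S : {set V}) (u v : V) : {set V} :=
  if u \in S then v |: S else S :\ v.

Definition moranP (S S' : {set V}) : R :=
  lam * (\sum_(u : V) \sum_(v : V | e u v)
           fit S u / total_fit S * ((deg u)%:R)^-1 * (upd S u v == S')%:R)
  + (1 - lam) * (\sum_(v : V) \sum_(u : V | e v u)
           (#|V|%:R)^-1 * (fit S u / nbr_fit S v) * (upd S u v == S')%:R).

Fixpoint moranPt (t : nat) (S S' : {set V}) : R :=
  match t with
  | 0 => (S == S')%:R
  | t'.+1 => \sum_(S'' : {set V}) moranPt t' S S'' * moranP S'' S'
  end.

Definition fix_prob (S0 : {set V}) : R :=
  limn (fun t => moranPt t S0 [set: V] : R^o).

(* Pr[T > t], T the absorption time (first t with S_t in {empty, V}) *)
Definition not_absorbed (S0 : {set V}) (t : nat) : R :=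
  \sum_(S : {set V} | (S != finset.set0) && (S != [set: V])) moranPt t S0 S.

(* expected absorption time E[T] = sum_{t>=0} Pr[T > t], in the extended reals *)
Definition absorption_time (S0 : {set V}) : \bar R :=
  (\sum_(0 <= t <oo) (not_absorbed S0 t)%:E)%E.

End Moran.

(* Main.v *)
Require Import Defs.
From HB Require Import structures.
From mathcomp Require Import all_boot all_order all_algebra.
From mathcomp Require Import all_classical all_reals all_analysis.
From mathcomp Require Import ring lra.
Import Order.TTheory GRing.Theory Num.Theory.
Local Open Scope ring_scope.
Section Mor.
Variables (R : realType) (V : finType) (e : rel V) (lam r alpha : R).
Hypothesis hsym : symmetric e.
Hypothesis hdeg : forall u, (0 < deg e u)%N.
Hypothesis hr1 : 1 <= r.
Hypothesis hlam : 0 <= lam <= 1.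
Hypothesis hn : (0 < #|V|)%N.
Implicit Types (S : {set V}) (u v w : V).

Local Notation nR := (#|V|%:R : R).
Local Notation dg u := ((deg e u)%:R : R).
Local Notation F S := (total_fit r S).
Local Notation W S v := (nbr_fit e r S v).

Lemma fit_ge1 S u : 1 <= fit r S u.
Proof. by rewrite /fit; case: ifP. Qed.
Lemma fit_ler S u : fit r S u <= r.
Proof. by rewrite /fit; case: ifP. Qed.
Lemma fit_gt0 S u : 0 < fit r S u.
Proof. exact: (lt_le_trans ltr01 (fit_ge1 S u)). Qed.

Lemma nR_gt0 : 0 < nR.
Proof. by rewrite ltr0n. Qed.
Lemma dg_gt0 u : 0 < dg u.
Proof. by rewrite ltr0n. Qed.

Lemma sum_nbr_const (c : R) v : \sum_(w | e v w) c = c * dg v.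
Proof.
rewrite (eq_bigl (fun w => w \in [set w | e v w])); last by move=> w; rewrite inE.
by rewrite sumr_const mulr_natr.
Qed.

Lemma W_ge S v : dg v <= W S v.
Proof.
rewrite -[dg v]mul1r -sum_nbr_const /nbr_fit.
by apply: ler_sum => w _; exact: fit_ge1.
Qed.
Lemma W_le S v : W S v <= r * dg v.
Proof.
rewrite -sum_nbr_const /nbr_fit.
by apply: ler_sum => w _; exact: fit_ler.
Qed.
Lemma W_gt0 S v : 0 < W S v.
Proof. exact: (lt_le_trans (dg_gt0 v) (W_ge S v)). Qed.

Lemma F_ge S : nR <= F S.
Proof.
have -> : nR = \sum_(w : V) (1 : R) by rewrite sumr_const.
by apply: ler_sum => w _; exact: fit_ge1.
Qed.
Lemma F_le S : F S <= r * nR.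
Proof.
have -> : r * nR = \sum_(w : V) r by rewrite sumr_const mulr_natr.
by apply: ler_sum => w _; exact: fit_ler.
Qed.
Lemma F_gt0 S : 0 < F S.
Proof. exact: (lt_le_trans nR_gt0 (F_ge S)). Qed.

Lemma sum_pick (I J : finType) (P : I -> J -> bool) (a : I -> J -> R)
   (g : I -> J -> {set V}) (f : {set V} -> R) :
 \sum_S' (\sum_i \sum_(j | P i j) a i j * (g i j == S')%:R) * f S'
   = \sum_i \sum_(j | P i j) a i j * f (g i j).
Proof.
under eq_bigr do rewrite mulr_suml.
rewrite exchange_big; apply: eq_bigr => i _.
under eq_bigr do rewrite mulr_suml.
rewrite exchange_big; apply: eq_bigr => j _.
rewrite (bigD1 (g i j)) //= eqxx mulr1 big1 ?addr0 // => S' hS'.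
by rewrite eq_sym (negPf hS') mulr0 mul0r.
Qed.

Definition E1 S (f : {set V} -> R) := \sum_S' moranP e lam r S S' * f S'.

Lemma E1_two S f : E1 S f =
  lam * (\sum_u \sum_(v | e u v) (fit r S u / F S * (dg u)^-1) * f (upd S u v))
  + (1 - lam) * (\sum_v \sum_(u | e v u) (nR^-1 * (fit r S u / W S v)) * f (upd S u v)).
Proof.
rewrite /E1 /moranP; under eq_bigr do rewrite mulrDl -!mulrA.
by rewrite big_split /= -!mulr_sumr !sum_pick.
Qed.

Lemma swap_e (G : V -> V -> R) :
  \sum_v \sum_(u | e v u) G u v = \sum_u \sum_(v | e u v) G u v.
Proof.
rewrite (exchange_big_dep xpredT) //=; apply: eq_bigr => u _.
by apply: eq_bigl => v; rewrite hsym.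
Qed.

Definition cc S u v : R :=
  lam * (fit r S u / F S * (dg u)^-1) + (1 - lam) * (nR^-1 * (fit r S u / W S v)).

Lemma E1_expand S f : E1 S f = \sum_u \sum_(v | e u v) cc S u v * f (upd S u v).
Proof.
rewrite E1_two (swap_e (fun u v => nR^-1 * (fit r S u / W S v) * f (upd S u v))).
rewrite !mulr_sumr -big_split; apply: eq_bigr => u _.
rewrite !mulr_sumr -big_split; apply: eq_bigr => v _.
rewrite /cc /=; ring.
Qed.

Lemma E1_one S : E1 S (fun _ => 1) = 1.
Proof.
rewrite E1_two.
have -> : \sum_u \sum_(v | e u v) (fit r S u / F S * (dg u)^-1) * 1 = 1.
  transitivity (\sum_u fit r S u / F S).
    apply: eq_bigr => u _; rewrite sum_nbr_const mulr1 -mulrA mulVf ?mulr1 //.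
    by rewrite gt_eqF // dg_gt0.
  by rewrite -mulr_suml mulfV // gt_eqF // F_gt0.
have -> : \sum_v \sum_(u | e v u) (nR^-1 * (fit r S u / W S v)) * 1 = 1.
  transitivity (\sum_(v : V) nR^-1).
    apply: eq_bigr => v _.
    under eq_bigr do rewrite mulr1 mulrA.
    rewrite -mulr_suml -mulr_sumr -/(nbr_fit e r S v) mulfK //.
    by rewrite gt_eqF // W_gt0.
  by rewrite sumr_const -(mulr_natr (nR^-1)) mulVf // gt_eqF // nR_gt0.
by rewrite !mulr1; ring.
Qed.

Lemma sum_cc S : \sum_u \sum_(v | e u v) cc S u v = 1.
Proof.
rewrite -(E1_one S) E1_expand; apply: eq_bigr => u _; apply: eq_bigr => v _.
by rewrite mulr1.
Qed.

Lemma cc_ge0 S u v : 0 <= cc S u v.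
Proof.
case/andP: hlam => l0 l1.
rewrite /cc addr_ge0 // mulr_ge0 // ?subr_ge0 //.
  by rewrite !mulr_ge0 // ?invr_ge0 ?ltW ?fit_gt0 ?F_gt0 ?dg_gt0.
by rewrite !mulr_ge0 // ?invr_ge0 ?ltW ?fit_gt0 ?W_gt0 ?nR_gt0.
Qed.

Lemma moranP_ge0 S S' : 0 <= moranP e lam r S S'.
Proof.
case/andP: hlam => l0 l1.
rewrite /moranP addr_ge0 // mulr_ge0 // ?subr_ge0 //;
  apply: sumr_ge0 => u _; apply: sumr_ge0 => v _;
  by rewrite !mulr_ge0 // ?invr_ge0 ?ltW ?fit_gt0 ?F_gt0 ?W_gt0 ?nR_gt0 ?dg_gt0.
Qed.


Hypothesis har : forall u v, dg u <= alpha * dg v.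
Hypothesis ha1 : 1 <= alpha.
Hypothesis ha2 : alpha ^+ 2 <= r.
Hypothesis hconn : graph_connected e.

Definition phi S : R := \sum_(w in S) dg w.
Definition del S u v : R :=
  if u \in S then (if v \in S then 0 else dg v) else (if v \in S then - dg v else 0).

Lemma phi_upd S u v : phi (upd S u v) = phi S + del S u v.
Proof.
rewrite /phi /upd /del; case: ifP => uS; case: (boolP (v \in S)) => vS.
- have -> : v |: S = S.
    by apply/setP => w; rewrite !inE; case: (eqVneq w v) => [->|] //=.
  by rewrite addr0.
- by rewrite big_setU1 //= addrC.
- by rewrite (big_setD1 v vS) /=; ring.
- have -> : S :\ v = S.
    apply/setP => w; rewrite !inE; case: (eqVneq w v) => [->|] //=.
    by rewrite (negPf vS).
  by rewrite addr0.
Qed.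

Lemma phi_ge0 S : 0 <= phi S.
Proof. by apply: sumr_ge0 => w _; rewrite ler0n. Qed.

Lemma phi_leM S : phi S <= phi [set: V].
Proof.
rewrite /phi big_mkcond [X in _ <= X]big_mkcond /=.
apply: ler_sum => w _; rewrite finset.in_setT; case: ifP => // _; by rewrite ler0n.
Qed.

Lemma A1 (l Fv a b : R) : 0 <= l -> 0 < Fv -> 0 < a -> 0 < b -> a ^+ 2 <= r * b ^+ 2 ->
  l * (1 / Fv * b^-1) * a <= l * (r / Fv * a^-1) * b.
Proof.
move=> l0 F0 a0 b0 hab.
have h : (1 / Fv * b^-1) * a <= (r / Fv * a^-1) * b.
  rewrite -subr_ge0.
  have -> : r / Fv * a^-1 * b - 1 / Fv * b^-1 * a = (r * b ^+ 2 - a ^+ 2) / (Fv * a * b).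
    by field; rewrite !gt_eqF.
  by rewrite divr_ge0 ?subr_ge0 // !mulr_ge0 // ltW.
by move: (ler_wpM2l l0 h); rewrite !mulrA.
Qed.

Lemma A2 (l n Wu Wv a b : R) : 0 <= l -> 0 < n -> 0 < Wu -> 0 < Wv ->
  a * Wv <= Wu * (r * b) ->
  l * (n^-1 * (1 / Wu)) * a <= l * (n^-1 * (r / Wv)) * b.
Proof.
move=> l0 n0 u0 v0 hab.
have h : (n^-1 * (1 / Wu)) * a <= (n^-1 * (r / Wv)) * b.
  rewrite -subr_ge0.
  have -> : n^-1 * (r / Wv) * b - n^-1 * (1 / Wu) * a = (Wu * (r * b) - a * Wv) / (n * Wu * Wv).
    by field; rewrite !gt_eqF.
  by rewrite divr_ge0 ?subr_ge0 // !mulr_ge0 // ltW.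
by move: (ler_wpM2l l0 h); rewrite !mulrA.
Qed.

Lemma key S u v : u \in S -> v \notin S -> cc S v u * dg u <= cc S u v * dg v.
Proof.
move=> uS vS; case/andP: hlam => l0 l1.
rewrite /cc /fit uS (negPf vS) (mulrDl _ _ (dg u)) (mulrDl _ _ (dg v)); apply: lerD.
  apply: A1 => //; [exact: F_gt0 | exact: dg_gt0 | exact: dg_gt0 |].
  have h1 : dg u ^+ 2 <= (alpha * dg v) ^+ 2.
    by rewrite !expr2 ler_pM // ?ler0n //.
  apply: (le_trans h1); rewrite exprMn ler_wpM2r // sqr_ge0 //.
apply: A2; rewrite ?subr_ge0 //; [exact: nR_gt0 | exact: W_gt0 | exact: W_gt0 |].
by apply: ler_pM; rewrite ?ler0n ?W_ge ?W_le // ltW // W_gt0.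
Qed.

Lemma drift S : 0 <= \sum_u \sum_(v | e u v) cc S u v * del S u v.
Proof.
pose P := fun u v => if (u \in S) && (v \notin S) then cc S u v * dg v else 0.
pose Q := fun u v => if (u \notin S) && (v \in S) then cc S u v * dg v else 0.
have E u v : cc S u v * del S u v = P u v - Q u v.
  rewrite /P /Q /del; case: (u \in S); case: (v \in S) => /=;
  by rewrite ?mulr0 ?mulrN ?subr0 ?sub0r.
rewrite (eq_bigr (fun u => \sum_(v | e u v) (P u v - Q u v))); last first.
  by move=> u _; apply: eq_bigr => v _; exact: E.
have -> : \sum_u \sum_(v | e u v) (P u v - Q u v) =
   \sum_u \sum_(v | e u v) P u v - \sum_u \sum_(v | e u v) Q u v.
  by rewrite -sumrB; apply: eq_bigr => u _; rewrite sumrB.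
rewrite (swap_e (fun u v => Q v u)) -sumrB.
apply: sumr_ge0 => u _; rewrite -sumrB; apply: sumr_ge0 => v _.
rewrite subr_ge0 /P /Q; case uS: (u \in S); case vS: (v \in S) => //=.
by apply: key; rewrite ?uS ?vS.
Qed.

Lemma boundary S : S != finset.set0 -> S != [set: V] ->
  exists u v, [/\ e u v, u \in S & v \notin S].
Proof.
case/set0Pn => x xS; rewrite -finset.subTset => /subsetPn [y _ yS].
move: (hconn x y) => /connectP [p pth yE]; rewrite yE in yS; clear yE.
elim: p x xS pth yS => [|z p IH] x xS /=; first by move=> _; rewrite xS.
case/andP => exz pth yS; case zS: (z \in S); first exact: IH zS pth yS.
by exists x, z; split=> //; rewrite zS.
Qed.

Lemma var_lb S u0 v0 (D : R) : e u0 v0 -> u0 \in S -> v0 \notin S ->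
  0 <= D -> D <= alpha * dg v0 ->
  D / (nR * alpha ^+ 2) <= \sum_u \sum_(v | e u v) cc S u v * del S u v ^+ 2.
Proof.
move=> e0 uS vS D0 hD; case/andP: hlam => l0 l1.
have a0 : 0 < alpha by apply: lt_le_trans ha1.
have n0 := nR_gt0; have du := dg_gt0 u0; have dv := dg_gt0 v0.
have F0 := F_gt0 S; have W0 := W_gt0 S v0.
apply: (@le_trans _ _ (cc S u0 v0 * del S u0 v0 ^+ 2)); last first.
  have tg : forall u v, 0 <= cc S u v * del S u v ^+ 2.
    by move=> u v; rewrite mulr_ge0 ?cc_ge0 ?sqr_ge0.
  rewrite (bigD1 u0) //= (bigD1 v0) //= -addrA lerDl addr_ge0 //.
    by apply: sumr_ge0 => *; exact: tg.
  by apply: sumr_ge0 => *; apply: sumr_ge0 => *; exact: tg.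
rewrite /del uS (negPf vS) /cc /fit uS mulrDl.
have -> : D / (nR * alpha ^+ 2) = lam * (D / (nR * alpha ^+ 2)) + (1 - lam) * (D / (nR * alpha ^+ 2)) by ring.
rewrite -!mulrA; apply: lerD; apply: ler_wpM2l; rewrite ?subr_ge0 //.
  rewrite -subr_ge0.
  set L := (X in 0 <= X).
  have -> : L = (r * dg v0 ^+ 2 * nR * alpha ^+ 2 - D * F S * dg u0) / (F S * dg u0 * nR * alpha ^+ 2).
    by rewrite /L; field; rewrite !gt_eqF.
  apply: divr_ge0; last by apply/ltW; rewrite !mulr_gt0 // exprn_gt0.
  rewrite subr_ge0.
  have h : D * F S * dg u0 <= (alpha * dg v0) * (r * nR) * (alpha * dg v0).
    apply: ler_pM; [by rewrite mulr_ge0 // ltW | exact: ltW | | exact: har].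
    by apply: ler_pM => //; [exact: ltW | exact: F_le].
  apply: (le_trans h).
  have E : (alpha * dg v0) * (r * nR) * (alpha * dg v0) = r * dg v0 ^+ 2 * nR * alpha ^+ 2 by ring.
  by rewrite E.
rewrite -subr_ge0.
set L := (X in 0 <= X).
have -> : L = (r * dg v0 ^+ 2 * alpha ^+ 2 - D * W S v0) / (nR * W S v0 * alpha ^+ 2).
  by rewrite /L; field; rewrite !gt_eqF.
apply: divr_ge0; last by apply/ltW; rewrite !mulr_gt0 // exprn_gt0.
rewrite subr_ge0.
have h : D * W S v0 <= (alpha * dg v0) * (r * dg v0).
  by apply: ler_pM => //; [exact: ltW | exact: W_le].
apply: (le_trans h).
have -> : alpha * dg v0 * (r * dg v0) = alpha * (r * dg v0 ^+ 2) by ring.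
have -> : r * dg v0 ^+ 2 * alpha ^+ 2 = alpha ^+ 2 * (r * dg v0 ^+ 2) by ring.
apply: ler_wpM2r; first by rewrite mulr_ge0 ?sqr_ge0 // (le_trans ler01).
by rewrite expr2 ler_peMr // ltW.
Qed.

Lemma sum2_lin S (a : V -> V -> R) (k : R) :
  \sum_u \sum_(v | e u v) cc S u v * (k + a u v)
  = k + \sum_u \sum_(v | e u v) cc S u v * a u v.
Proof.
transitivity (k * (\sum_u \sum_(v | e u v) cc S u v) + \sum_u \sum_(v | e u v) cc S u v * a u v).
  rewrite mulr_sumr -big_split; apply: eq_bigr => u _.
  rewrite mulr_sumr -big_split; apply: eq_bigr => v _ /=; ring.
by rewrite sum_cc mulr1.
Qed.

Lemma sum2_split S (a b : V -> V -> R) (k : R) :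
  \sum_u \sum_(v | e u v) cc S u v * (k * a u v + b u v)
  = k * (\sum_u \sum_(v | e u v) cc S u v * a u v) + \sum_u \sum_(v | e u v) cc S u v * b u v.
Proof.
rewrite mulr_sumr -big_split; apply: eq_bigr => u _.
rewrite mulr_sumr -big_split; apply: eq_bigr => v _ /=; ring.
Qed.

Lemma E1_phi S : phi S <= E1 S phi.
Proof.
rewrite E1_expand.
rewrite (eq_bigr (fun u => \sum_(v | e u v) cc S u v * (phi S + del S u v))); last first.
  by move=> u _; apply: eq_bigr => v _; rewrite phi_upd.
by rewrite sum2_lin lerDl drift.
Qed.

Definition nonabs S : bool := (S != finset.set0) && (S != [set: V]).
Definition hh S : R := phi S ^+ 2.

Variable x0 : V.
Local Notation delta := (dg x0 / (nR * alpha ^+ 2)).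

Lemma E1_h S : hh S + delta * (nonabs S)%:R <= E1 S hh.
Proof.
rewrite E1_expand.
rewrite (eq_bigr (fun u => \sum_(v | e u v) cc S u v *
   (phi S ^+ 2 + (2 * phi S * del S u v + del S u v ^+ 2)))); last first.
  by move=> u _; apply: eq_bigr => v _; rewrite /hh phi_upd; congr (_ * _); ring.
rewrite sum2_lin sum2_split /hh lerD2l.
have v0 : 0 <= \sum_u \sum_(v | e u v) cc S u v * del S u v ^+ 2.
  by apply: sumr_ge0 => u _; apply: sumr_ge0 => v _; rewrite mulr_ge0 ?cc_ge0 ?sqr_ge0.
have d0 : 0 <= 2 * phi S * \sum_u \sum_(v | e u v) cc S u v * del S u v.
  by rewrite !mulr_ge0 ?phi_ge0 ?drift.
rewrite /nonabs; case: (boolP ((S != finset.set0) && (S != [set: V]))) => [/andP [h1 h2]|_] /=;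
  last by rewrite mulr0n mulr0 addr_ge0.
have [u [v [euv uS vS]]] := boundary S h1 h2.
rewrite mulr1n mulr1 -[delta]add0r; apply: lerD => //.
apply: (var_lb _ _ _ _ euv uS vS); first by rewrite ler0n.
exact: har.
Qed.

Variable S0 : {set V}.
Definition Et t (f : {set V} -> R) := \sum_S moranPt e lam r t S0 S * f S.

Lemma Pt_ge0 t S : 0 <= moranPt e lam r t S0 S.
Proof.
elim: t S => [|t IH] S /=; first by rewrite ler0n.
by apply: sumr_ge0 => S' _; rewrite mulr_ge0 ?moranP_ge0.
Qed.

Lemma Et_succ t f : Et t.+1 f = \sum_S moranPt e lam r t S0 S * E1 S f.
Proof.
rewrite /Et /=; under eq_bigr do rewrite mulr_suml.
rewrite exchange_big; apply: eq_bigr => S _.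
rewrite /E1 mulr_sumr; apply: eq_bigr => S' _; by rewrite mulrA.
Qed.

Lemma Et_mono t f g : (forall S, g S <= E1 S f) -> Et t g <= Et t.+1 f.
Proof.
move=> h; rewrite Et_succ; apply: ler_sum => S _; apply: ler_wpM2l => //.
exact: Pt_ge0.
Qed.

Lemma Et_le t f g : (forall S, f S <= g S) -> Et t f <= Et t g.
Proof.
move=> h; apply: ler_sum => S _; apply: ler_wpM2l => //; exact: Pt_ge0.
Qed.

Lemma Et_ge0 t f : (forall S, 0 <= f S) -> 0 <= Et t f.
Proof. by move=> h; apply: sumr_ge0 => S _; rewrite mulr_ge0 ?Pt_ge0. Qed.

Lemma pick_eq (x : {set V}) (f : {set V} -> R) :
  \sum_S (x == S)%:R * f S = f x.
Proof.
rewrite (bigD1 x) //= eqxx mul1r big1 ?addr0 // => S hS.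
by rewrite eq_sym (negPf hS) mul0r.
Qed.

Lemma Et0 f : Et 0 f = f S0.
Proof. exact: pick_eq. Qed.

Lemma E1_const S c : E1 S (fun _ => c) = c.
Proof.
rewrite /E1 -mulr_suml; have := E1_one S; rewrite /E1.
under eq_bigr do rewrite mulr1.
by move=> ->; rewrite mul1r.
Qed.

Lemma Et_const t c : Et t (fun _ => c) = c.
Proof.
elim: t => [|t IH]; first by rewrite Et0.
rewrite Et_succ; under eq_bigr do rewrite E1_const; exact: IH.
Qed.

Lemma Et_lin t f g k : Et t (fun S => f S + k * g S) = Et t f + k * Et t g.
Proof.
rewrite /Et mulr_sumr -big_split; apply: eq_bigr => S _ /=; ring.
Qed.

Definition na t := Et t (fun S => (nonabs S)%:R).

Lemma na_eq t : not_absorbed e lam r S0 t = na t.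
Proof.
rewrite /not_absorbed /na /Et big_mkcond; apply: eq_bigr => S _.
rewrite /nonabs; case: ifP => _; by rewrite ?mulr1 ?mulr0.
Qed.

Lemma na_ge0 t : 0 <= na t.
Proof. by apply: Et_ge0 => S; rewrite ler0n. Qed.

Lemma Phi t : delta * \sum_(0 <= s < t) na s <= Et t hh.
Proof.
elim: t => [|t IH].
  by rewrite big_geq // mulr0 Et0 /hh sqr_ge0.
rewrite big_nat_recr //= mulrDr.
apply: (le_trans _ (Et_mono t hh (fun S => hh S + delta * (nonabs S)%:R) E1_h)).
by rewrite Et_lin lerD2r.
Qed.

Lemma Et_hh_le t : Et t hh <= phi [set: V] ^+ 2.
Proof.
rewrite -[X in _ <= X](Et_const t); apply: Et_le => S.
by rewrite /hh !expr2 ler_pM ?phi_ge0 ?phi_leM.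
Qed.

Lemma Psi t : phi S0 <= Et t phi.
Proof.
elim: t => [|t IH]; first by rewrite Et0.
apply: (le_trans IH); apply: Et_mono; exact: E1_phi.
Qed.

Lemma PV_eq t : moranPt e lam r t S0 [set: V] = Et t (fun S => (S == [set: V])%:R).
Proof.
rewrite /Et (bigD1 [set: V]) //= eqxx mulr1 big1 ?addr0 // => S hS.
by rewrite (negPf hS) mulr0.
Qed.

Lemma E1_T S : (S == [set: V])%:R <= E1 S (fun S => (S == [set: V])%:R).
Proof.
case: eqP => [->|_]; last by apply: sumr_ge0 => S' _; rewrite mulr_ge0 ?moranP_ge0 ?ler0n.
rewrite E1_expand.
have -> : \sum_u \sum_(v | e u v) cc [set: V] u v * (upd [set: V] u v == [set: V])%:R
    = \sum_u \sum_(v | e u v) cc [set: V] u v.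
  apply: eq_bigr => u _; apply: eq_bigr => v _.
  have -> : upd [set: V] u v = [set: V].
    by rewrite /upd finset.in_setT; apply/setP => w; rewrite !inE orbT.
  by rewrite eqxx /= mulr1n mulr1.
by rewrite sum_cc.
Qed.

Lemma PV_mono : nondecreasing_seq (fun t => moranPt e lam r t S0 [set: V]).
Proof.
apply/nondecreasing_seqP => t; rewrite !PV_eq; apply: Et_mono; exact: E1_T.
Qed.

Lemma PV_le1 t : moranPt e lam r t S0 [set: V] <= 1.
Proof.
rewrite PV_eq; apply: (le_trans (Et_le t (fun S => (S == [set: V])%:R) (fun _ => 1) _)).
  by move=> S; case: eqP => _ /=; rewrite ?mulr1n ?mulr0n ?ler01 ?lexx.
by rewrite Et_const.
Qed.

Lemma phi_split S : phi S <= phi [set: V] * ((S == [set: V])%:R + (nonabs S)%:R).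
Proof.
rewrite /nonabs; case: (eqVneq S [set: V]) => [->|hT] /=.
  by rewrite andbF addr0 mulr1.
case: (eqVneq S finset.set0) => [->|h0] /=.
  by rewrite /phi big_set0 add0r mulr0.
by rewrite add0r mulr1 phi_leM.
Qed.

Lemma Psi_le t : Et t phi <= phi [set: V] * (moranPt e lam r t S0 [set: V] + na t).
Proof.
rewrite PV_eq /na /Et -big_split mulr_sumr; apply: ler_sum => S _ /=.
rewrite -mulrDr mulrCA; apply: ler_wpM2l; [exact: Pt_ge0 | exact: phi_split].
Qed.

Hypothesis x0S : x0 \in S0.

Lemma a0 : 0 < alpha.
Proof. exact: lt_le_trans ltr01 ha1. Qed.

Lemma M_le : phi [set: V] <= nR * alpha * dg x0.
Proof.
rewrite /phi; apply: (@le_trans _ _ (\sum_(w in [set: V]) (alpha * dg x0))).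
  by apply: ler_sum => w _; exact: har.
rewrite sumr_const cardsT -(mulr_natr (alpha * dg x0)).
have -> : alpha * dg x0 * nR = nR * alpha * dg x0 by ring.
exact: lexx.
Qed.

Lemma D_le : dg x0 <= nR.
Proof. by rewrite ler_nat /deg max_card. Qed.

Lemma Mbound : phi [set: V] ^+ 2 <= delta * (r ^+ 2 * nR ^+ 4).
Proof.
have a0 := a0; have n0 := nR_gt0; have D0 := dg_gt0 x0.
have h1 : phi [set: V] ^+ 2 <= (nR * alpha * dg x0) ^+ 2.
  by rewrite !expr2 ler_pM ?phi_ge0 ?M_le.
apply: (le_trans h1); rewrite -subr_ge0.
set L := (X in 0 <= X).
have -> : L = (dg x0 * r ^+ 2 * nR ^+ 4 - (nR * alpha * dg x0) ^+ 2 * (nR * alpha ^+ 2)) / (nR * alpha ^+ 2).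
  by rewrite /L; field; rewrite !gt_eqF.
apply: divr_ge0; last by apply/ltW; rewrite mulr_gt0 // exprn_gt0.
rewrite subr_ge0.
have h4 : alpha ^+ 4 <= r ^+ 2.
  have -> : alpha ^+ 4 = alpha ^+ 2 * alpha ^+ 2 by rewrite -exprD.
  by rewrite [r ^+ 2]expr2; apply: ler_pM; rewrite // exprn_ge0 // ltW.
have h5 : alpha ^+ 4 * dg x0 <= r ^+ 2 * nR.
  apply: ler_pM => //; [exact: exprn_ge0 (ltW a0) | exact: D_le].
have -> : (nR * alpha * dg x0) ^+ 2 * (nR * alpha ^+ 2) = (nR ^+ 3 * dg x0) * (alpha ^+ 4 * dg x0) by ring.
have -> : dg x0 * r ^+ 2 * nR ^+ 4 = (nR ^+ 3 * dg x0) * (r ^+ 2 * nR) by ring.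
by rewrite ler_wpM2l // mulr_ge0 ?exprn_ge0 ?ltW.
Qed.

Lemma sum_na_bound t : \sum_(0 <= s < t) na s <= r ^+ 2 * nR ^+ 4.
Proof.
have dpos : 0 < delta.
  by rewrite divr_gt0 ?dg_gt0 // mulr_gt0 ?nR_gt0 // exprn_gt0 // a0.
have h := le_trans (le_trans (Phi t) (Et_hh_le t)) Mbound.
by rewrite ler_pM2l in h.
Qed.

Local Notation eps := ((2 * nR * alpha ^+ 2)^-1).

Lemma exists_small : exists t, na t <= eps.
Proof.
have e0 : 0 < eps by rewrite invr_gt0 !mulr_gt0 ?nR_gt0 ?exprn_gt0 ?a0.
case: (pselect (exists t, na t <= eps)) => // H; exfalso.
have H' : forall t, eps < na t.
  by move=> t; rewrite ltNge; apply/negP => h; apply: H; exists t.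
set B := r ^+ 2 * nR ^+ 4.
have B0 : 0 <= B by rewrite mulr_ge0 ?exprn_ge0 ?ltW ?nR_gt0 // (lt_le_trans ltr01).
set T := Num.bound (B / eps).
have hT : B / eps < T%:R by apply: archi_boundP; rewrite divr_ge0 // ltW.
rewrite ltr_pdivrMr // in hT.
have h1 : T%:R * eps <= \sum_(0 <= s < T) na s.
  have hs : \sum_(0 <= s < T) eps = T%:R * eps.
    by rewrite sumr_const_nat subn0 [RHS]mulr_natl.
  rewrite -hs; by apply: ler_sum => s _; exact: ltW.
have := lt_le_trans hT (le_trans h1 (sum_na_bound T)).
by rewrite ltxx.
Qed.

Lemma PV_lb t : na t <= eps -> eps <= moranPt e lam r t S0 [set: V].
Proof.
move=> ht.
have a0 := a0; have n0 := nR_gt0; have D0 := dg_gt0 x0.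
have hphi : dg x0 <= phi S0.
  rewrite /phi (big_setD1 x0 x0S) /= lerDl; by apply: sumr_ge0 => w _; rewrite ler0n.
have h1 := le_trans hphi (le_trans (Psi t) (Psi_le t)).
set P := moranPt e lam r t S0 [set: V] in h1 *.
have P0 : 0 <= P by apply: Pt_ge0.
have h2 : dg x0 * 1 <= dg x0 * (nR * alpha * (P + na t)).
  rewrite mulr1; apply: (le_trans h1).
  have -> : dg x0 * (nR * alpha * (P + na t)) = (nR * alpha * dg x0) * (P + na t) by ring.
  by rewrite ler_wpM2r ?addr_ge0 ?na_ge0 ?M_le.
rewrite ler_pM2l // in h2.
rewrite -div1r ler_pdivrMr ?mulr_gt0 ?exprn_gt0 //.
rewrite -div1r ler_pdivlMr ?mulr_gt0 ?exprn_gt0 // in ht.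
have h3 : 2 * alpha * 1 <= 2 * alpha * (nR * alpha * (P + na t)).
  by rewrite ler_wpM2l // mulr_ge0 // ltW.
have -> : P * (2 * nR * alpha ^+ 2) = 2 * alpha * (nR * alpha * (P + na t)) - na t * (2 * nR * alpha ^+ 2) by ring.
rewrite mulr1 in h3.
set X := 2 * alpha * (nR * alpha * (P + na t)) in h3 *.
set Y := na t * (2 * nR * alpha ^+ 2) in ht *.
have := ha1; lra.
Qed.

Lemma final : (absorption_time e lam r S0 <= (r ^+ 2 * nR ^+ 4)%:E)%E /\
  (2 * r)^-1 * (nR ^+ 2)^-1 <= fix_prob e lam r S0.
Proof.
split.
  rewrite /absorption_time.
  have u0 : forall n, (0 <= n)%N -> true -> (0 <= (not_absorbed e lam r S0 n)%:E)%E.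
    by move=> n _ _; rewrite lee_fin na_eq na_ge0.
  apply: (lime_le (is_cvg_nneseries u0)); apply: nearW => k.
  rewrite sumEFin lee_fin.
  under eq_bigr do rewrite na_eq.
  exact: sum_na_bound.
have [t ht] := exists_small.
have h := PV_lb t ht.
have cv : cvgn (fun t => moranPt e lam r t S0 [set: V] : R^o).
  apply: nondecreasing_is_cvgn; first exact: PV_mono.
  by exists 1 => y [s _ <-]; exact: PV_le1.
apply: le_trans (nondecreasing_cvgn_le PV_mono cv t).
apply: le_trans h.
have a0 := a0; have n0 := nR_gt0.
rewrite -invfM lef_pV2 ?posrE ?mulr_gt0 ?exprn_gt0 // ?(lt_le_trans ltr01) //.
have h1 : nR * alpha ^+ 2 <= nR * r := ler_wpM2l (ltW n0) ha2.
have h2 : nR <= nR ^+ 2.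
  by rewrite expr2; apply: ler_peMl; [exact: ltW | rewrite ler1n; exact: hn].
have h3 : nR * r <= nR ^+ 2 * r := ler_wpM2r (le_trans ler01 hr1) h2.
rewrite -!mulrA ler_wpM2l //; apply: (le_trans h1); by rewrite [r * _]mulrC.
Qed.

End Mor.

Lemma deg_pos (V : finType) (e : rel V) : graph_connected e -> (2 <= #|V|)%N ->
  forall u, (0 < deg e u)%N.
Proof.
move=> hc h2 u.
have : (0 < #|[set~ u]|)%N by rewrite cardsC1; case: #|V| h2 => [|[|k]].
case/card_gt0P => w; rewrite in_setC1 => wu.
case/connectP: (hc u w) => p; case: p => [|z p] /=.
  by move=> _ wE; rewrite wE eqxx in wu.
case/andP => euz _ _; apply/card_gt0P; exists z; by rewrite inE.
Qed.

Theorem mainTheorem8 (R : realType) (r : R) (hr : 0 < r) :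
  exists C c : R, 0 < C /\ 0 < c /\
    forall (alpha : R) (V : finType) (e : rel V),
      1 <= alpha ->
      simple_graph e -> graph_connected e -> (2 <= #|V|)%N ->
      almost_regular e alpha ->
      alpha ^+ 2 <= r ->
      forall (lam : R), 0 <= lam <= 1 ->
      forall S0 : {set V}, S0 != finset.set0 ->
        (absorption_time e lam r S0 <= (C * (#|V|%:R) ^+ 4)%:E)%E /\
        c * ((#|V|%:R) ^+ 2)^-1 <= fix_prob e lam r S0.
Proof.
exists (r ^+ 2), ((2 * r)^-1); split; first exact: exprn_gt0.
split; first by rewrite invr_gt0 mulr_gt0.
move=> alpha V e ha1 [hsym _] hconn h2 har ha2 lam hlam S0 hS0.
have hr1 : 1 <= r.
  apply: le_trans ha2; rewrite expr2; apply: (le_trans ha1).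
  by apply: ler_peMl => //; apply: le_trans ha1.
have hn : (0 < #|V|)%N by apply: leq_trans h2.
case/set0Pn: hS0 => x0 x0S.
have H := (final R V e lam r alpha hsym (deg_pos _ _ hconn h2) hr1 hlam hn har ha1 ha2 hconn x0 S0 x0S).
exact: H.
Qed.
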